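(* Let $n\ge 1$. If $1<k\le n$, then \begin{align*} \mathcal{H}_k^f(\theta_1,\dots,\theta_{2n})=\;&\mathcal{H}_k^f(\theta_3,\dots,\theta_{2n})\;\oplus\;\mathcal{H}_1^f(\theta_1,\theta_2)\otimes\mathcal{H}_{k-1}^f(\theta_3,\dots,\theta_{2n})\\ &\oplus\;\Big[\theta_1\theta_2+\frac{1}{k-n-1}\big(\theta_3\theta_4+\dots+\theta_{2n-1}\theta_{2n}\big)\Big]\mathcal{H}_{k-2}^f(\theta_3,\dots,\theta_{2n}). \end{align*} If $k=1$, then $\mathcal{H}_1^f(\theta_1,\dots,\theta_{2n})=\mathcal{H}_1^f(\theta_3,\dots,\theta_{2n})\oplus\mathcal{H}_1^f(\theta_1,\theta_2)$.
   Context: Let $\theta_1,\dots,\theta_{2n}$ be generators of the real Grassmann algebra $\Lambda_{2n}$ (anticommuting: $\theta_i\theta_j=-\theta_j\theta_i$), with Grassmann derivatives $\partial_{\theta_j}$. For a list of variables $\theta_{2a-1},\theta_{2a},\dots,\theta_{2b-1},\theta_{2b}$, the fermionic Laplacian is $\Delta_f=4\sum_{j=a}^{b}\partial_{\theta_{2j-1}}\partial_{\theta_{2j}}$, and $\mathcal{H}_k^f(\theta_{2a-1},\dots,\theta_{2b})$ denotes the space of elements of the Grassmann algebra generated by these variables which are homogeneous of degree $k$ and annihilated by this $\Delta_f$ (fermionic spherical harmonics); $\mathcal{H}_0^f$ consists of the constants. All these spaces are regarded as subspaces of $\Lambda_{2n}$. $\mathcal{H}_1^f(\theta_1,\theta_2)\otimes\mathcal{H}_{k-1}^f(\theta_3,\dots,\theta_{2n})$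 denotes the linear span of products $ab$ with $a$, $b$ in the respective spaces, and $p\,\mathcal{H}$ denotes $\{p h: h\in\mathcal{H}\}$. The sums are direct sums of subspaces. *)

(* Defs.v *)
From mathcomp Require Import all_boot all_order all_algebra.
Set Implicit Arguments. Unset Strict Implicit. Unset Printing Implicit Defensive.
Import Order.TTheory GRing.Theory Num.Theory.
Local Open Scope ring_scope.

(* Generators: theta_{2j+1} is (j,false), theta_{2j+2} is (j,true), for j : 'I_n
   (0-based pairs).  rk gives the 0-based position of a generator in the
   list theta_1, ..., theta_{2n}. *)
Definition gvar (n : nat) := ('I_n * bool)%type.
Definition rk n (v : gvar n) : nat := (2 * v.1 + v.2)%N.

(* An element of Lambda_{2n} is given by its coefficients on the monomial basis
   theta_S = theta_{i1} ... theta_{ik} (i1 < ... < ik, S = {i1,...,ik}). *)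
Definition grass (R : realFieldType) n := {ffun {set gvar n} -> R}.

(* number of inversions when concatenating theta_S and theta_T *)
Definition ninv n (S T : {set gvar n}) : nat :=
  #|[set p : gvar n * gvar n | [&& p.1 \in S, p.2 \in T & (rk p.2 < rk p.1)%N]]|.

Definition gmul (R : realFieldType) n (a b : grass R n) : grass R n :=
  [ffun U : {set gvar n} => \sum_(S : {set gvar n}) \sum_(T : {set gvar n})
     if [disjoint S & T] && (S :|: T == U)
     then (-1) ^+ ninv S T * a S * b T else 0].

Definition theta (R : realFieldType) n (i : gvar n) : grass R n :=
  [ffun U : {set gvar n} => if U == [set i] then 1 else 0].

Definition gone (R : realFieldType) n : grass R n :=
  [ffun U : {set gvar n} => if U == set0 then 1 else 0].

(* (left) Grassmann derivative d/d theta_i *)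
Definition gderiv (R : realFieldType) n (i : gvar n) (a : grass R n) : grass R n :=
  [ffun U : {set gvar n} => if i \in U then 0
             else (-1) ^+ #|[set x in U | (rk x < rk i)%N]| * a (i |: U)].

Definition gscale (R : realFieldType) n (c : R) (a : grass R n) : grass R n :=
  [ffun U : {set gvar n} => c * a U].

Definition gvars n (J : {set 'I_n}) : {set gvar n} := [set v : gvar n | v.1 \in J].

Definition flap (R : realFieldType) n (J : {set 'I_n}) (a : grass R n) : grass R n :=
  gscale 4 (\sum_(j in J) gderiv (j, false) (gderiv (j, true) a)).

Definition fharm (R : realFieldType) n (J : {set 'I_n}) (k : nat) (a : grass R n) : Prop :=
  (forall S, a S != 0 -> S \subset gvars J /\ #|S| = k) /\ flap J a = 0.

Definition tens (R : realFieldType) n (A B : grass R n -> Prop) (x : grass R n) : Prop :=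
  exists s : seq (grass R n * grass R n),
    (forall p, p \in s -> A p.1 /\ B p.2) /\ x = \sum_(p <- s) gmul p.1 p.2.

Definition lmulset (R : realFieldType) n (p : grass R n) (H : grass R n -> Prop)
  (x : grass R n) : Prop := exists h, H h /\ x = gmul p h.

Definition dsum2 (R : realFieldType) n (H A B : grass R n -> Prop) : Prop :=
  (forall x, H x <-> exists a b, [/\ A a, B b & x = a + b]) /\
  (forall a b a' b', A a -> B b -> A a' -> B b' -> a + b = a' + b' -> a = a' /\ b = b').

Definition dsum3 (R : realFieldType) n (H A B C : grass R n -> Prop) : Prop :=
  (forall x, H x <-> exists a b c, [/\ A a, B b, C c & x = a + b + c]) /\
  (forall a b c a' b' c', A a -> B b -> C c -> A a' -> B b' -> C c' ->
     a + b + c = a' + b' + c' -> [/\ a = a', b = b' & c = c']).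

(* index sets: all pairs (theta_1..theta_{2n}), first pair (theta_1,theta_2),
   remaining pairs (theta_3..theta_{2n}) *)
Definition Jall n : {set 'I_n} := setT.
Definition Jfirst n : {set 'I_n} := [set j : 'I_n | nat_of_ord j == 0%N].
Definition Jrest n : {set 'I_n} := [set j : 'I_n | (0 < nat_of_ord j)%N].

(* Main.v *)
Require Import Defs.
From mathcomp Require Import all_boot all_order all_algebra.
From mathcomp Require Import zify ring lra.
Import Order.TTheory GRing.Theory Num.Theory.
Set Implicit Arguments. Unset Strict Implicit. Unset Printing Implicit Defensive.
Local Open Scope ring_scope.

Section Grass.
Variable R : realFieldType.
Variable n : nat.
Implicit Types (a b h : grass R n) (U S T : {set gvar n}) (J : {set 'I_n}).

Definition Pj (j : 'I_n) : {set gvar n} := [set v : gvar n | v.1 == j].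

Lemma rk_inj : injective (@rk n).
Proof.
move=> [i b] [j c]; rewrite /rk /= => h.
have [hij hbc] : nat_of_ord i = j /\ b = c.
  by case: b h; case: c => /= h; split => //; lia.
by rewrite (val_inj hij) hbc.
Qed.

Lemma disjP (T0 : finType) (A B : {set T0}) :
  reflect (forall x, x \in A -> x \in B -> False) [disjoint A & B].
Proof.
rewrite disjoints_subset; apply: (iffP subsetP) => h x hA.
  by move: (h x hA); rewrite inE => /negP.
by rewrite inE; apply/negP => hB; exact: h x hA hB.
Qed.

Lemma in_Pj j v : (v \in Pj j) = (v.1 == j).
Proof. by rewrite inE. Qed.

Lemma disj_Pj j U :
  [disjoint Pj j & U] = ((j, false) \notin U) && ((j, true) \notin U).
Proof.
apply/disjP/andP => [h|[h1 h2] [i b]]; first by split; apply/negP => hU;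
  apply: (h _ _ hU); rewrite in_Pj.
rewrite in_Pj /= => /eqP ->; case: b => hU.
  by move: h2; rewrite hU.
by move: h1; rewrite hU.
Qed.

Lemma sub_split S U T : S \subset U ->
  ([disjoint S & T] && (S :|: T == U)) = (T == U :\: S).
Proof.
move=> hSU; apply/idP/eqP => [/andP[hd /eqP <-]|->].
  apply/setP => x; rewrite !inE; case hx: (x \in T); case hs: (x \in S) => //=.
  by move/disjP: hd => /(_ x hs); rewrite hx => /(_ isT).
rewrite disjoint_sym; apply/andP; split.
  by apply/disjP => x; rewrite !inE => /andP[/negP].
apply/eqP/setP => x; rewrite !inE; case hx: (x \in S); rewrite /= ?andbT //.
by rewrite (subsetP hSU _ hx).
Qed.

Lemma gmulE a b U : gmul a b U =
  \sum_(S : {set gvar n} | S \subset U) (-1) ^+ ninv S (U :\: S) * a S * b (U :\: S).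
Proof.
rewrite ffunE (bigID (fun S => S \subset U)) /= [X in _ + X]big1 ?addr0.
  apply: eq_bigr => S hS; rewrite (bigD1 (U :\: S)) /= ?sub_split ?eqxx //.
  rewrite big1 ?addr0 // => T hT; by rewrite sub_split // (negbTE hT).
move=> S hS; apply: big1 => T _; case: ifP => // /andP[_ /eqP hU].
by move: hS; rewrite -hU subsetUl.
Qed.

Lemma gderiv2E j a U : gderiv (j, false) (gderiv (j, true) a) U =
  if [disjoint Pj j & U] then - a (U :|: Pj j) else 0.
Proof.
rewrite disj_Pj /gderiv !ffunE; case: (boolP ((j, false) \in U)) => hf //=.
rewrite !inE /= xpair_eqE eqxx /=; case: (boolP ((j, true) \in U)) => ht //=.
  by rewrite mulr0.
have -> : (j, true) |: ((j, false) |: U) = U :|: Pj j.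
  apply/setP => -[i b]; rewrite !inE /= !xpair_eqE; case: b; case: (i == j);
  by rewrite ?orbT ?orbF.
have -> : [set x in (j, false) |: U | (rk x < rk (j, true))%N] =
          (j, false) |: [set x in U | (rk x < rk (j, false))%N].
  apply/setP => x; rewrite !inE; case: (eqVneq x (j, false)) => [->|hx] /=.
    by rewrite /rk /= addn0 addn1 leqnn.
  case hxU: (x \in U) => //=.
  have hrk : rk x != rk (j, false).
    by apply/eqP => /rk_inj hx'; rewrite hx' eqxx in hx.
  move: hrk; rewrite /rk /= addn0 addn1 ltnS leq_eqVlt => /negbTE ->.
  by [].
rewrite cardsU1 !inE (negbTE hf) /= exprD expr1 mulN1r mulNr mulrN mulrA -expr2 sqrr_sign mul1r.
by [].
Qed.


Definition lap J a U : R :=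
  \sum_(j in J) (if [disjoint Pj j & U] then a (U :|: Pj j) else 0).

Lemma flapE J a U : flap J a U = - 4 * lap J a U.
Proof.
rewrite /flap /gscale ffunE sum_ffunE mulNr -mulrN -sumrN; congr (_ * _).
by apply: eq_bigr => j _; rewrite gderiv2E; case: ifP; rewrite ?oppr0.
Qed.

Lemma flap0P J a : flap J a = 0 <-> forall U, lap J a U = 0.
Proof.
split => [h U|h].
  have /eqP := congr1 (fun f : grass R n => f U) h.
  by rewrite flapE ffunE mulf_eq0 oppr_eq0 pnatr_eq0 /= => /eqP.
by apply/ffunP => U; rewrite flapE h ffunE mulr0.
Qed.

Lemma disjF (T0 : finType) (A B : {set T0}) x :
  [disjoint A & B] -> x \in A -> (x \in B) = false.
Proof. by move=> /disjP h hA; apply/negP => hB; exact: h x hA hB. Qed.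

Lemma setUDA (T0 : finType) (A U : {set T0}) : [disjoint A & U] -> (U :|: A) :\: A = U.
Proof.
move=> hd; apply/setP => x; rewrite !inE; case hA: (x \in A) => /=.
  by rewrite (disjF hd hA).
by rewrite orbF.
Qed.
Lemma setUDsw (T0 : finType) (A B U : {set T0}) : [disjoint A & B] -> (U :|: A) :\: B = (U :\: B) :|: A.
Proof.
move=> hd; apply/setP => x; rewrite !inE; case hA: (x \in A) => /=.
  by rewrite (disjF hd hA) orbT.
by rewrite !orbF.
Qed.
Lemma setDUB (T0 : finType) (B U : {set T0}) : B \subset U -> (U :\: B) :|: B = U.
Proof.
move=> hs; apply/setP => x; rewrite !inE; case hB: (x \in B) => /=.
  by rewrite (subsetP hs _ hB).
by rewrite orbF.
Qed.
Lemma subUdisj (T0 : finType) (A B U : {set T0}) : [disjoint B & A] -> (B \subset U :|: A) = (B \subset U).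
Proof.
move=> hd; apply/idP/idP => h; last exact: subset_trans h (subsetUl _ _).
apply/subsetP => x hx; move: (subsetP h x hx); rewrite inE (disjF hd hx) orbF.
by [].
Qed.
Definition shS S b : grass R n :=
  [ffun U : {set gvar n} => if S \subset U then b (U :\: S) else 0].

Lemma disjD (T0 : finType) (A U S : {set T0}) : [disjoint A & S] ->
  [disjoint A & U :\: S] = [disjoint A & U].
Proof.
move=> hAS; apply/disjP/disjP => h x hA.
  move=> hU; apply: (h x hA); by rewrite inE hU (disjF hAS hA).
by rewrite inE => /andP[_ hU]; exact: h x hA hU.
Qed.

Lemma lap_shS J S b U : (forall j, j \in J -> [disjoint Pj j & S]) ->
  lap J (shS S b) U = if S \subset U then lap J b (U :\: S) else 0.
Proof.
move=> hJ; rewrite /lap; case: ifP => hSU.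
  apply: eq_bigr => j hj; have hd := hJ j hj; rewrite disjD //.
  case: ifP => hjU //; rewrite ffunE (subset_trans hSU (subsetUl _ _)).
  congr (b _); apply/setP => x; rewrite !inE; case hx: (x.1 == j) => /=.
    have hxP : x \in Pj j by rewrite in_Pj hx.
    by rewrite (disjF hd hxP) !orbT.
  by rewrite !orbF.
apply: big1 => j hj; case: ifP => // hd; rewrite ffunE; case: ifP => // hS.
move/negbT: hSU => /negP hSU; exfalso; apply: hSU; apply/subsetP => x hx.
move/subsetP: hS => /(_ x hx); rewrite inE => /orP[] //.
move=> hxP; have := hJ j hj; by move/disjF => /(_ x hxP); rewrite hx.
Qed.


Lemma gmulDl a1 a2 b : gmul (a1 + a2) b = gmul a1 b + gmul a2 b.
Proof.
apply/ffunP => U; rewrite [RHS]ffunE !gmulE -big_split; apply: eq_bigr => S _.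
by rewrite ffunE mulrDr mulrDl.
Qed.

Lemma gmulZl c a b : gmul (gscale c a) b = gscale c (gmul a b).
Proof.
apply/ffunP => U; rewrite [RHS]ffunE !gmulE mulr_sumr; apply: eq_bigr => S _.
by rewrite ffunE mulrCA !mulrA.
Qed.

Lemma gmul_suml J (F : 'I_n -> grass R n) b :
  gmul (\sum_(j in J) F j) b = \sum_(j in J) gmul (F j) b.
Proof.
apply/ffunP => U; rewrite [RHS]sum_ffunE gmulE.
under eq_bigr do rewrite sum_ffunE mulr_sumr mulr_suml.
rewrite exchange_big; apply: eq_bigr => j _; by rewrite gmulE.
Qed.

Lemma Pj2 j : Pj j = [set (j, false); (j, true)].
Proof.
by apply/setP => -[i b]; rewrite !inE /= !xpair_eqE; case: b; rewrite ?andbT ?andbF ?orbF.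
Qed.

Definition pind j : grass R n := [ffun U => if U == Pj j then 1 else 0].

Lemma gmul_pair j : gmul (theta R (j, false)) (theta R (j, true)) = pind j.
Proof.
apply/ffunP => U; rewrite gmulE ffunE big_mkcond (bigD1 [set (j, false)]) //=.
rewrite big1 ?addr0; last first.
  by move=> S hS; rewrite ffunE (negbTE hS) mulr0 mul0r; case: ifP.
rewrite !ffunE eqxx mulr1; case: (eqVneq U (Pj j)) => [->|hU].
  rewrite sub1set in_Pj eqxx.
  have -> : Pj j :\: [set (j, false)] = [set (j, true)].
    by apply/setP => -[i b]; rewrite !inE /= !xpair_eqE; case: b; case: (i == j).
  rewrite eqxx mulr1 /ninv.
  have -> : [set p : gvar n * gvar n | [&& p.1 \in [set (j, false)], p.2 \in [set (j, true)]
     & (rk p.2 < rk p.1)%N]] = set0.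
    apply/setP => -[p q]; rewrite !inE /=; apply/negP => /and3P[/eqP -> /eqP ->].
    rewrite /rk /=; lia.
  by rewrite cards0 expr0.
case: ifP => // hsub; case: ifP => [/eqP hUt|]; last by rewrite mulr0.
exfalso; move/eqP: hU; apply.
rewrite Pj2 -hUt setDE setUIr setUCr setIT; apply/setP => x; rewrite !inE.
by case: (eqVneq x (j, false)) => // ->; rewrite sub1set in hsub.
Qed.

Lemma disjPj i j : i != j -> [disjoint Pj i & Pj j].
Proof.
move=> hij; apply/disjP => x; rewrite !in_Pj => /eqP -> /eqP hx.
by rewrite hx eqxx in hij.
Qed.

Lemma ninv_Pj j T : [disjoint Pj j & T] -> ninv (Pj j) T = (2 * #|[set w in T | (w.1 < j)%N]|)%N.
Proof.
move=> hd; rewrite /ninv.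
have -> : [set p : gvar n * gvar n | [&& p.1 \in Pj j, p.2 \in T & (rk p.2 < rk p.1)%N]] =
  setX (Pj j) [set w in T | (w.1 < j)%N].
  apply/setP => -[p q]; rewrite !inE /=.
  case hp: (p.1 == j) => //=; case hq: (q \in T) => //=.
  have hqj : q.1 != j.
    apply/negP => hqj; have hq' : q \in Pj j by rewrite in_Pj.
    by rewrite (disjF hd hq') in hq.
  move/eqP: hp; case: p => [i b] /= ->; case: q hqj {hq} => [i' b'] /= hqj.
  rewrite /rk /=; move: hqj; rewrite -(inj_eq val_inj) /=.
  by case: b; case: b' => /= hne; apply/idP/idP => h; lia.
rewrite cardsX Pj2 cards2 xpair_eqE eqxx /=.
by [].
Qed.

Lemma gmul_pindE j h U : gmul (pind j) h U = shS (Pj j) h U.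
Proof.
rewrite gmulE ffunE big_mkcond (bigD1 (Pj j)) //= big1 ?addr0; last first.
  by move=> S hS; rewrite ffunE (negbTE hS) mulr0 mul0r; case: ifP.
rewrite ffunE eqxx mulr1; case: ifP => // hsub.
rewrite ninv_Pj; first by rewrite mulnC exprM sqrr_sign mul1r.
by apply/disjP => x hx; rewrite inE hx.
Qed.


Definition Eop J h : grass R n := \sum_(j in J) shS (Pj j) h.
Definition lapf J h : grass R n := [ffun U => lap J h U].

Lemma sum_if_const J (P : pred 'I_n) (x : R) :
  \sum_(i in J) (if P i then x else 0) = #|[set i in J | P i]|%:R * x.
Proof.
rewrite -big_mkcondr mulr_natl -sumr_const; apply: eq_bigl => i; by rewrite inE.
Qed.

Lemma comm_lap J h U : lap J (Eop J h) U = Eop J (lapf J h) U +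
  ((#|[set i in J | [disjoint Pj i & U]]|)%:R - (#|[set j in J | Pj j \subset U]|)%:R) * h U.
Proof.
pose G i j := if (j != i) && [disjoint Pj i & U] && (Pj j \subset U)
              then h ((U :\: Pj j) :|: Pj i) else 0.
have hL : forall i, i \in J ->
  (if [disjoint Pj i & U] then Eop J h (U :|: Pj i) else 0) =
  (if [disjoint Pj i & U] then h U else 0) + \sum_(j in J) G i j.
  move=> i hi; case: ifP => hd; last first.
    by rewrite add0r big1 // => j _; rewrite /G hd andbF.
  rewrite /Eop sum_ffunE (bigD1 i) //= [X in _ = _ + X](bigD1 i) //= /G eqxx /= add0r.
  congr (_ + _).
    by rewrite ffunE subsetUr setUDA.
  apply: eq_bigr => j /andP[hj hji]; rewrite hji /= ffunE subUdisj; last first.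
    by apply: disjPj.
  case: ifP => _; rewrite hd ?andbT ?andbF //= setUDsw //; apply: disjPj; by rewrite eq_sym.
have hR : forall j, j \in J ->
  shS (Pj j) (lapf J h) U =
  (if Pj j \subset U then h U else 0) + \sum_(i in J) G i j.
  move=> j hj; rewrite ffunE; case: ifP => hs; last first.
    by rewrite add0r big1 // => i _; rewrite /G hs andbF.
  rewrite ffunE /lap (bigD1 j) //= [X in _ = _ + X](bigD1 j) //= /G eqxx /= add0r.
  have -> : [disjoint Pj j & U :\: Pj j].
    by apply/disjP => x hx; rewrite inE hx.
  rewrite setDUB //; congr (_ + _); apply: eq_bigr => i /andP[hi hij].
  rewrite eq_sym hij /= hs andbT disjD //; by apply: disjPj.
rewrite /lap (eq_bigr _ hL) big_split /= sum_if_const.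
rewrite /Eop sum_ffunE (eq_bigr _ hR) big_split /= sum_if_const (exchange_big).
rewrite mulrBl [RHS]addrC addrA subrK.
by [].
Qed.


Lemma card_predJ J (P : pred 'I_n) :
  #|[set i in J | P i]| = (\sum_(i in J) (P i : nat))%N.
Proof.
rewrite -sum1_card big_mkcond [RHS]big_mkcond /=; apply: eq_bigr => i _.
by rewrite inE; case: (i \in J); case: (P i).
Qed.

Lemma count_pairs J U : U \subset gvars J ->
  (#|[set i in J | [disjoint Pj i & U]]| + #|U| =
   #|J| + #|[set j in J | Pj j \subset U]|)%N.
Proof.
move=> hU.
have -> : #|U| = (\sum_(i in J) (((i, false) \in U) + ((i, true) \in U)))%N.
  transitivity (\sum_(x : gvar n) (if x \in U then 1 else 0))%N.
    by rewrite -sum1_card big_mkcond.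
  rewrite (eq_bigr (fun x : gvar n => if (x.1, x.2) \in U then 1 else 0)%N); last by case.
  rewrite -(pair_bigA _ (fun i (c : bool) => if (i, c) \in U then 1 else 0)%N) /=.
  rewrite (bigID (mem J)) /= [X in (_ + X)%N]big1 ?addn0; last first.
    move=> i hi; rewrite big_bool /=; case: ifP => h1.
      by move: (subsetP hU _ h1); rewrite inE /= (negbTE hi).
    case: ifP => h2 //.
    by move: (subsetP hU _ h2); rewrite inE /= (negbTE hi).
  apply: eq_bigr => i _; rewrite big_bool /= addnC.
  by case: ((i, false) \in U); case: ((i, true) \in U).
rewrite !card_predJ -sum1_card -!big_split /=; apply: eq_bigr => i _.
rewrite disj_Pj Pj2 subUset !sub1set.
by case: ((i, false) \in U); case: ((i, true) \in U).
Qed.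


Lemma lapD J a b U : lap J (a + b) U = lap J a U + lap J b U.
Proof.
rewrite /lap -big_split; apply: eq_bigr => j _; rewrite ffunE.
by case: ifP => _ /=; rewrite ?addr0.
Qed.

Lemma lapZ J c a U : lap J (gscale c a) U = c * lap J a U.
Proof.
rewrite /lap mulr_sumr; apply: eq_bigr => j _; rewrite ffunE.
by case: ifP; rewrite ?mulr0.
Qed.

Lemma fharm0 J k : fharm J k (0 : grass R n).
Proof.
split; first by move=> S; rewrite ffunE eqxx.
by apply/flap0P => U; rewrite /lap big1 // => j _; rewrite ffunE; case: ifP.
Qed.

Lemma fharmD J k a b : fharm J k a -> fharm J k b -> fharm J k (a + b).
Proof.
move=> [sa /flap0P la] [sb /flap0P lb]; split.
  move=> S; rewrite ffunE; case: (eqVneq (a S) 0) => [->|/sa //].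
  by rewrite add0r => /sb.
by apply/flap0P => U; rewrite lapD la lb addr0.
Qed.

Lemma fharmZ J k c a : fharm J k a -> fharm J k (gscale c a).
Proof.
move=> [sa /flap0P la]; split.
  by move=> S; rewrite ffunE mulf_eq0 negb_or => /andP[_ /sa].
by apply/flap0P => U; rewrite lapZ la mulr0.
Qed.

Lemma card_Pj j : #|Pj j| = 2%N.
Proof. by rewrite Pj2 cards2 xpair_eqE eqxx. Qed.

Lemma lap_deg J a k U : (forall S, a S != 0 -> #|S| = k) -> (k < 2)%N ->
  lap J a U = 0.
Proof.
move=> h hk; rewrite /lap big1 // => j _; case: ifP => // _.
apply/eqP; apply/negPn/negP => /h hc.
have := subset_leq_card (subsetUr U (Pj j)); rewrite card_Pj hc; lia.
Qed.

End Grass.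

Section Main.
Variables (R : realFieldType) (n : nat) (hn : (1 <= n)%N).
Local Notation o := (Ordinal hn).
Local Notation f := (Ordinal hn, false).
Local Notation t := (Ordinal hn, true).
Local Notation P0 := (Pj (Ordinal hn)).
Local Notation G := (grass R n).
Implicit Types (a b h x : G) (U S W : {set gvar n}).

Lemma jrest j : (j \in Jrest n) = (j != o).
Proof. by rewrite inE lt0n -(inj_eq val_inj). Qed.

Lemma gv_rest v : (v \in gvars (Jrest n)) = (v \notin P0).
Proof. by rewrite /gvars inE jrest in_Pj. Qed.

Lemma sub_rest U : (U \subset gvars (Jrest n)) = [disjoint P0 & U].
Proof.
apply/subsetP/disjP => h x.
  by move=> hP hU; have := h x hU; rewrite gv_rest hP.
by move=> hU; rewrite gv_rest; apply/negP => hP; exact: h x hP hU.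
Qed.

Lemma lap_all a U : lap (Jall n) a U =
  (if [disjoint P0 & U] then a (U :|: P0) else 0) + lap (Jrest n) a U.
Proof.
rewrite /lap (bigD1 o) ?in_setT //=; congr (_ + _); apply: eq_bigl => j.
by rewrite jrest in_setT.
Qed.

Lemma restdisj j : j \in Jrest n -> [disjoint Pj j & P0].
Proof. by rewrite jrest => h; apply: disjPj. Qed.

Lemma fP0 : f \in P0. Proof. by rewrite in_Pj. Qed.
Lemma tP0 : t \in P0. Proof. by rewrite in_Pj. Qed.

Lemma card_Jrest : #|Jrest n| = n.-1.
Proof.
rewrite (_ : Jrest n = [set~ o]) ?cardsC1 ?card_ord //.
by apply/setP => j; rewrite jrest !inE.
Qed.

Lemma disjP0 U : [disjoint P0 & U] = (f \notin U) && (t \notin U).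
Proof. exact: disj_Pj. Qed.

Lemma supp_rest k b : fharm (Jrest n) k b -> forall S, b S != 0 -> [disjoint P0 & S].
Proof. by move=> [hb _] S /hb [h _]; rewrite -sub_rest. Qed.

Lemma supp_rest0 k b S : fharm (Jrest n) k b -> ~~ [disjoint P0 & S] -> b S = 0.
Proof.
move=> hb hS; apply/eqP; apply/negPn/negP => /(supp_rest hb) hd.
by rewrite hd in hS.
Qed.

Lemma gmul_theta_rest v b U : v \in P0 ->
  (forall S, b S != 0 -> [disjoint P0 & S]) ->
  gmul (theta R v) b U = shS [set v] b U.
Proof.
move=> hv hb; rewrite gmulE ffunE big_mkcond (bigD1 [set v]) //= big1 ?addr0;
  last by move=> S hS; rewrite ffunE (negbTE hS) mulr0 mul0r; case: ifP.
rewrite ffunE eqxx mulr1; case: ifP => // hsub.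
case: (eqVneq (b (U :\: [set v])) 0) => [->|/hb hd]; first by rewrite !mulr0.
suff -> : ninv [set v] (U :\: [set v]) = 0%N by rewrite expr0 mul1r.
apply/eqP; rewrite cards_eq0; apply/eqP/setP => -[p q]; rewrite inE /= in_set0.
apply/negP => /and3P[hp hq hrk]; rewrite inE in hp; move/eqP: hp => hp; subst p.
have hq0 : q \in P0.
  move: hv hrk; rewrite !in_Pj; case: v {hsub hd hq} => [i c] /= /eqP ->.
  case: q => [i' c'] /=; rewrite /rk /= -(inj_eq val_inj) /= => hrk.
  by apply/eqP; move: hrk; case: c; case: c' => /=; lia.
by rewrite (disjF hd hq0) in hq.
Qed.

Lemma gmul_theta_restF v b : v \in P0 ->
  (forall S, b S != 0 -> [disjoint P0 & S]) ->
  gmul (theta R v) b = shS [set v] b.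
Proof. by move=> hv hb; apply/ffunP => U; exact: gmul_theta_rest. Qed.

Lemma set1ft : ([set f] == [set t]) = false.
Proof. by apply/negP => /eqP /setP /(_ f); rewrite !inE xpair_eqE eqxx. Qed.

Lemma first1_dec a : fharm (Jfirst n) 1 a ->
  a = gscale (a [set f]) (theta R f) + gscale (a [set t]) (theta R t).
Proof.
move=> [ha _]; apply/ffunP => S; rewrite !ffunE.
case: (eqVneq S [set f]) => [->|hf]; first by rewrite set1ft mulr0 mulr1 addr0.
case: (eqVneq S [set t]) => [->|ht]; first by rewrite mulr0 mulr1 add0r.
rewrite !mulr0 addr0.
apply/eqP; apply/negPn/negP => /ha [hs /eqP /cards1P [v hv]]; subst S.
move: hs; rewrite sub1set /gvars !inE.
case: v hf ht => [i c] hf ht /= hi.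
have hio : i = o by apply: val_inj => /=; apply/eqP.
by subst i; case: c hf ht; rewrite eqxx.
Qed.

Lemma gmul_first a b : fharm (Jfirst n) 1 a ->
  (forall S, b S != 0 -> [disjoint P0 & S]) ->
  gmul a b = gscale (a [set f]) (shS [set f] b) + gscale (a [set t]) (shS [set t] b).
Proof.
move=> ha hb; rewrite {1}(first1_dec ha) gmulDl !gmulZl.
by rewrite !gmul_theta_restF //; [exact: tP0|exact: fP0].
Qed.

Lemma disj_rest1 j v : j \in Jrest n -> v \in P0 -> [disjoint Pj j & [set v]].
Proof.
rewrite jrest => hj; rewrite in_Pj => /eqP hv.
apply/disjP => x; rewrite in_Pj inE => /eqP hx /eqP hxv.
by subst x; move: hj; rewrite -hx hv eqxx.
Qed.

Lemma notdisj_other U v : v \in P0 -> ~~ [disjoint P0 & (U :|: P0) :\: [set v]].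
Proof.
rewrite in_Pj disjP0 => /eqP; case: v => [i c] /= ->.
by case: c; rewrite !inE /= eqxx orbT.
Qed.

Lemma sh1_harm v b k : v \in P0 -> fharm (Jrest n) k.-1 b -> (0 < k)%N ->
  fharm (Jall n) k (shS [set v] b).
Proof.
move=> hv hb hk; have [sb /flap0P lb] := hb; split.
  move=> S; rewrite ffunE; case: ifP => [hs hne|_]; last by rewrite eqxx. have [h1 h2] := sb _ hne.
  split; first by apply/subsetP => x _; rewrite /gvars inE in_setT.
  rewrite (cardsD1 v) -sub1set hs /=; rewrite h2; lia.
apply/flap0P => U; rewrite lap_all lap_shS; last first.
  by move=> j hj; apply: disj_rest1.
case: ifP => _; last by case: ifP; rewrite ?add0r ?addr0 // lb.
rewrite ffunE (subset_trans _ (subsetUr U P0)) ?sub1set // (supp_rest0 hb) ?notdisj_other // add0r.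
by case: ifP => // _; rewrite lb.
Qed.

Lemma prod_in k a b : (1 < k)%N -> fharm (Jfirst n) 1 a -> fharm (Jrest n) k.-1 b ->
  fharm (Jall n) k (gmul a b) /\ (forall U, (f \in U) = (t \in U) -> gmul a b U = 0).
Proof.
move=> hk h1 h2; rewrite gmul_first //; last exact: supp_rest h2.
split.
  apply: fharmD; apply: fharmZ; apply: sh1_harm => //;
    [exact: fP0 | lia | exact: tP0 | lia].
move=> U hU; rewrite !ffunE.
move: hU; rewrite !sub1set => hU.
case: ifP => hf; case: ifP => ht; rewrite ?mulr0 ?addr0 //.
- by rewrite !(supp_rest0 h2) ?mulr0 ?addr0 // disjP0 !inE /= ?hf ?ht.
- by rewrite -hU hf in ht.
- by rewrite hU ht in hf.
Qed.

Lemma tens_in k (y : G) : (1 < k)%N ->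
  tens (fharm (Jfirst n) 1) (fharm (Jrest n) k.-1) y ->
  fharm (Jall n) k y /\ (forall U, (f \in U) = (t \in U) -> y U = 0).
Proof.
move=> hk [s [hs ->]]; elim: s hs => [|p s IH] hs.
  by rewrite big_nil; split; [exact: fharm0 | move=> U _; rewrite ffunE].
rewrite big_cons.
have [h1 z1] := IH (fun q hq => hs q (mem_behead (s := p :: s) hq)).
have [hp1 hp2] := hs p (mem_head _ _).
have [h2 z2] := prod_in hk hp1 hp2.
split; first exact: fharmD.
by move=> U hU; rewrite ffunE z1 // z2 // addr0.
Qed.

Lemma rest_all k a : fharm (Jrest n) k a -> fharm (Jall n) k a.
Proof.
move=> ha; have [sa /flap0P la] := ha; split.
  move=> S /sa [_ h]; split => //; by apply/subsetP => x _; rewrite /gvars inE in_setT.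
apply/flap0P => U; rewrite lap_all la addr0; case: ifP => // _.
by rewrite (supp_rest0 ha) // disjP0 !in_setU fP0 tP0 !orbT.
Qed.

Lemma gmul_pindF j h : gmul (pind R j) h = shS (Pj j) h.
Proof. by apply/ffunP => U; rewrite gmul_pindE. Qed.

Lemma gmul_p c h :
  gmul (gmul (theta R f) (theta R t) +
        gscale c (\sum_(j in Jrest n) gmul (theta R (j, false)) (theta R (j, true)))) h
  = shS P0 h + gscale c (Eop (Jrest n) h).
Proof.
rewrite gmulDl gmulZl gmul_suml gmul_pair gmul_pindF; congr (_ + gscale c _).
by apply: eq_bigr => j _; rewrite gmul_pair gmul_pindF.
Qed.

Lemma Eop0 J U : Eop J (0 : G) U = 0.
Proof. by rewrite /Eop sum_ffunE big1 // => j _; rewrite !ffunE; case: ifP. Qed.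

Lemma lapE_val m h U : fharm (Jrest n) m h ->
  lap (Jrest n) (Eop (Jrest n) h) U = ((n.-1)%:R - m%:R) * h U.
Proof.
move=> hh; have [sh /flap0P lh] := hh.
rewrite comm_lap (_ : lapf (Jrest n) h = 0); last by apply/ffunP => W; rewrite !ffunE lh.
rewrite Eop0 add0r; case: (eqVneq (h U) 0) => [->|/sh [hs hc]]; first by rewrite !mulr0.
have := count_pairs hs; rewrite card_Jrest hc => /(congr1 (fun z => z%:R : R)).
rewrite !natrD => e; congr (_ * _); lra.
Qed.

Lemma key_id k : (1 < k <= n)%N ->
  1 + (k%:R - n%:R - 1)^-1 * ((n.-1)%:R - (k - 2)%:R) = 0 :> R.
Proof.
move=> /andP[hk hkn].
have e1 : (n.-1)%:R = n%:R - 1 :> R.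
  by rewrite -[in RHS](@prednK n) // -addn1 natrD addrK.
have e2 : (k - 2)%:R = k%:R - 2 :> R by rewrite natrB.
have hne : k%:R - n%:R - 1 != 0 :> R.
  have : k%:R <= n%:R :> R by rewrite ler_nat.
  move=> h; apply/eqP => h0; lra.
rewrite e1 e2 (_ : n%:R - 1 - (k%:R - 2) = - (k%:R - n%:R - 1) :> R); last by ring.
by rewrite mulrN mulVf // subrr.
Qed.

Lemma card_sub_Pj j U : Pj j \subset U -> #|U| = (#|U :\: Pj j| + 2)%N.
Proof.
move=> hs; rewrite cardsD (setIidPr hs) card_Pj.
have := subset_leq_card hs; rewrite card_Pj; lia.
Qed.

Lemma shS_supp m j h U : fharm (Jrest n) m h -> shS (Pj j) h U != 0 ->
  [&& Pj j \subset U, [disjoint P0 & U :\: Pj j] & #|U| == (m + 2)%N].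
Proof.
move=> hh; rewrite ffunE; case: ifP => [hs hne|_]; last by rewrite eqxx.
have [h1 h2] := (hh.1 _ hne); rewrite -sub_rest h1 /=.
by rewrite (card_sub_Pj hs) h2.
Qed.

Lemma supp_Eop m h U : fharm (Jrest n) m h -> Eop (Jrest n) h U != 0 ->
  [disjoint P0 & U] /\ #|U| = (m + 2)%N.
Proof.
move=> hh hE.
have [j hj hne] : exists2 j, j \in Jrest n & shS (Pj j) h U != 0.
  case: (boolP [exists j in Jrest n, shS (Pj j) h U != 0]) => [/exists_inP //|hno].
  move: hE; rewrite /Eop sum_ffunE big1 ?eqxx // => j hj; apply/eqP.
  by move: hno; rewrite negb_exists_in => /forall_inP /(_ j hj); rewrite negbK.
have /and3P[hs hd /eqP hc] := shS_supp hh hne; split => //.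
rewrite -(disjD U (S := Pj j)) //; apply: disjPj; by rewrite eq_sym -jrest.
Qed.

Lemma Eop_vanish m h W : fharm (Jrest n) m h -> P0 \subset W ->
  Eop (Jrest n) h W = 0.
Proof.
move=> hh hW; rewrite /Eop sum_ffunE big1 // => j hj; rewrite ffunE.
case: ifP => // _; apply: (supp_rest0 hh); rewrite disjP0 !inE.
have hfj : f \notin Pj j by rewrite in_Pj /= eq_sym -jrest.
have htj : t \notin Pj j by rewrite in_Pj /= eq_sym -jrest.
rewrite !in_Pj in hfj htj; rewrite hfj /=.
by rewrite (subsetP hW _ fP0) (subsetP hW _ tP0).
Qed.

Lemma third_in k h : (1 < k <= n)%N -> fharm (Jrest n) (k - 2) h ->
  fharm (Jall n) k (shS P0 h + gscale (k%:R - n%:R - 1)^-1 (Eop (Jrest n) h)).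
Proof.
move=> hk hh; have [sh /flap0P lh] := hh; split.
  move=> S hne.
  have e : (shS P0 h + gscale (k%:R - n%:R - 1)^-1 (Eop (Jrest n) h)) S =
    shS P0 h S + (k%:R - n%:R - 1)^-1 * Eop (Jrest n) h S.
    by rewrite {1}ffunE [gscale _ _ S]ffunE.
  rewrite e in hne.
  split; first by apply/subsetP => x _; rewrite /gvars inE in_setT.
  case: (eqVneq (shS P0 h S) 0) => [h0|/(shS_supp hh) /and3P[_ _ /eqP ->]];
    last by move/andP: hk => [hk _]; lia.
  move: hne; rewrite h0 add0r mulf_eq0 negb_or => /andP[_ /(supp_Eop hh) [_ ->]].
  by move/andP: hk => [hk _]; lia.
apply/flap0P => U; rewrite lap_all lapD lapZ lap_shS; last first.
  by move=> j hj; apply: restdisj.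
rewrite (lapE_val _ hh) [X in X + _ = 0](_ : _ = h U).
  case: ifP => _; first rewrite lh; rewrite add0r mulrA -[X in X + _]mul1r -mulrDl.
    by rewrite key_id // mul0r.
  by rewrite key_id // mul0r.
case: ifP => hd.
  rewrite !ffunE subsetUr setUDA // (Eop_vanish hh (subsetUr _ _)) mulr0 addr0.
  by [].
by rewrite (supp_rest0 hh) // hd.
Qed.

Lemma disjUr (A U S : {set gvar n}) :
  [disjoint A & U :|: S] = [disjoint A & U] && [disjoint A & S].
Proof.
apply/disjP/andP => [h|[h1 h2] x hA]; last first.
  by rewrite inE => /orP[]; [exact: (disjP _ _ h1) | exact: (disjP _ _ h2)].
by split; apply/disjP => x hA hx; apply: (h x hA); rewrite inE hx ?orbT.
Qed.

Lemma card_disjU (U S : {set gvar n}) : [disjoint U & S] -> #|U :|: S| = (#|U| + #|S|)%N.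
Proof.
move=> hd; have := cardsUI U S.
rewrite (_ : U :&: S = set0) ?cards0 ?addn0 //.
by apply/setP => x; rewrite !inE; case hx: (x \in U) => //=; rewrite (disjF hd hx).
Qed.

Definition Dsh S x : G := [ffun U : {set gvar n} => if [disjoint P0 & U] then x (U :|: S) else 0].

Lemma lap_Dsh S x U : S \subset P0 ->
  lap (Jrest n) (Dsh S x) U = if [disjoint P0 & U] then lap (Jrest n) x (U :|: S) else 0.
Proof.
move=> hS; rewrite /lap; case: ifP => hd.
  apply: eq_bigr => j hj; rewrite ffunE disjUr hd (disjoint_sym P0) (restdisj hj) /=.
  have hjS : [disjoint Pj j & S].
    by apply/disjP => v hv /(subsetP hS) hv0; exact: (disjP _ _ (restdisj hj)) v hv hv0.
  rewrite disjUr hjS andbT; case: ifP => // _; congr (x _).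
  by rewrite -!setUA [Pj j :|: S]setUC.
apply: big1 => j hj; case: ifP => // _; by rewrite ffunE disjUr hd.
Qed.

Lemma Dsh_harm S x k m : S \subset P0 -> S != set0 -> fharm (Jall n) k x ->
  (#|S| + m = k)%N -> fharm (Jrest n) m (Dsh S x).
Proof.
move=> hS hS0 hx hk; have [sx /flap0P lx] := hx; split.
  move=> U; rewrite ffunE; case: ifP => [hd hne|_]; last by rewrite eqxx.
  rewrite sub_rest hd; split => //; have [_ hc] := sx _ hne.
  move: hc; rewrite card_disjU; first by lia.
  apply/disjP => v hvU /(subsetP hS) hv0; exact: (disjP _ _ hd) v hv0 hvU.
apply/flap0P => U; rewrite lap_Dsh //; case: ifP => // hd.
have := lx (U :|: S); rewrite lap_all; case: ifP => [hd'|_]; last by rewrite add0r.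
move: hS0; case/set0Pn => v hv; move: hd'; rewrite disjUr => /andP[_ /disjP h].
by exfalso; exact: h v (subsetP hS _ hv) hv.
Qed.

Lemma decomp_pt x U : x U = Dsh set0 x U + shS [set f] (Dsh [set f] x) U +
  shS [set t] (Dsh [set t] x) U + shS P0 (Dsh P0 x) U.
Proof.
have hP : (P0 \subset U) = (f \in U) && (t \in U) by rewrite Pj2 subUset !sub1set.
rewrite !ffunE hP !sub1set !disjP0 setU0.
have hft : (f == t) = false by rewrite xpair_eqE andbF.
have htf : (t == f) = false by rewrite xpair_eqE andbF.
case hf: (f \in U); case ht: (t \in U) => /=;
  rewrite ?in_setD ?in_set1 ?fP0 ?tP0 ?hf ?ht ?hft ?htf ?eqxx /= ?add0r ?addr0 //.
- by rewrite setDUB // Pj2 subUset !sub1set hf ht.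
- by rewrite setDUB // sub1set.
- by rewrite setDUB // sub1set.
Qed.

Lemma theta_first v : v \in P0 -> fharm (Jfirst n) 1 (theta R v).
Proof.
move=> hv; have hs : forall S, theta R v S != 0 -> S = [set v].
  by move=> S; rewrite ffunE; case: ifP => [/eqP -> //|_]; rewrite eqxx.
split.
  move=> S /hs ->; rewrite cards1; split => //.
  by rewrite sub1set /gvars !inE; move: hv; rewrite in_Pj => /eqP ->.
by apply/flap0P => U; apply: (@lap_deg R n (Jfirst n) (theta R v) 1 U) => // S /hs ->; rewrite cards1.
Qed.

Local Notation pp k := (gmul (theta R f) (theta R t) +
  gscale (k%:R - n%:R - 1)^-1
   (\sum_(j in Jrest n) gmul (theta R (j, false)) (theta R (j, true)))).

Lemma exist3 k x : (1 < k <= n)%N -> fharm (Jall n) k x ->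
  exists a b c, [/\ fharm (Jrest n) k a,
    tens (fharm (Jfirst n) 1) (fharm (Jrest n) k.-1) b,
    lmulset (pp k) (fharm (Jrest n) (k - 2)) c & x = a + b + c].
Proof.
move=> hk hx; have [sx /flap0P lx] := hx.
have hk' := hk; move/andP: hk' => [hk1 hkn].
set c := (k%:R - n%:R - 1)^-1.
have hD : fharm (Jrest n) (k - 2) (Dsh P0 x).
  apply: (@Dsh_harm P0 x k) => //; [apply/set0Pn; exists f; exact: fP0 | rewrite card_Pj; lia].
have hB : fharm (Jrest n) k.-1 (Dsh [set f] x).
  apply: (@Dsh_harm _ x k) => //; [by rewrite sub1set fP0 | apply/set0Pn; exists f; by rewrite inE |
    rewrite cards1; lia].
have hC : fharm (Jrest n) k.-1 (Dsh [set t] x).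
  apply: (@Dsh_harm _ x k) => //; [by rewrite sub1set tP0 | apply/set0Pn; exists t; by rewrite inE |
    rewrite cards1; lia].
exists (Dsh set0 x + gscale (- c) (Eop (Jrest n) (Dsh P0 x))).
exists (gmul (theta R f) (Dsh [set f] x) + gmul (theta R t) (Dsh [set t] x)).
exists (gmul (pp k) (Dsh P0 x)).
split.
- split.
    move=> S hne.
    have e : (Dsh set0 x + gscale (- c) (Eop (Jrest n) (Dsh P0 x))) S =
      Dsh set0 x S + - c * Eop (Jrest n) (Dsh P0 x) S.
      by rewrite {1}ffunE [gscale _ _ S]ffunE.
    move: hne; rewrite e; case: (eqVneq (Dsh set0 x S) 0) => [->|hA _].
      rewrite add0r mulf_eq0 negb_or => /andP[_ /(supp_Eop hD) [hd hc]].
      rewrite sub_rest hd; split => //; rewrite hc; lia.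
    move: hA; rewrite ffunE setU0; case: ifP => [hd /sx [_ hc]|_]; last by rewrite eqxx.
    by rewrite sub_rest hd.
  apply/flap0P => U; rewrite lapD lapZ lap_Dsh ?sub0set // (lapE_val _ hD) setU0.
  have := lx U; rewrite lap_all.
  case: ifP => hd.
    move=> e; rewrite (_ : lap (Jrest n) x U = - Dsh P0 x U); last first.
      by rewrite ffunE hd; apply/eqP; rewrite -addr_eq0 addrC e.
    rewrite mulNr mulrA -opprD -{1}[Dsh P0 x U]mul1r -mulrDl key_id //.
    by rewrite mul0r oppr0.
  by rewrite ffunE hd => _; rewrite !mulr0 addr0.
- exists [:: (theta R f, Dsh [set f] x); (theta R t, Dsh [set t] x)]; split.
    move=> q; rewrite !inE => /orP[/eqP ->|/eqP ->] /=; split => //;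
      apply: theta_first; [exact: fP0 | exact: tP0].
  by rewrite big_cons big_cons big_nil addr0.
- by exists (Dsh P0 x).
rewrite gmul_p !gmul_theta_restF; [|exact: tP0|exact: (supp_rest hC)|exact: fP0|exact: (supp_rest hB)].
apply/ffunP => U; rewrite {1}(decomp_pt x U) /c.
set E := Eop (Jrest n) (Dsh P0 x).
rewrite !ffunE; move: (E U) ((k%:R - n%:R - 1)^-1) => e q.
set a1 := (if [disjoint P0 & U] then _ else _).
set a2 := (if [set f] \subset U then _ else _).
set a3 := (if [set t] \subset U then _ else _).
set a4 := (if P0 \subset U then _ else _).
ring.
Qed.

Lemma c_at m q h U : fharm (Jrest n) m h -> P0 \subset U ->
  (shS P0 h + gscale q (Eop (Jrest n) h)) U = h (U :\: P0).
Proof.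
move=> hh hU; rewrite {1}ffunE [gscale _ _ U]ffunE (Eop_vanish hh hU) mulr0 addr0.
by rewrite ffunE hU.
Qed.

Lemma ndisjUP0 W : ~~ [disjoint P0 & W :|: P0].
Proof. by rewrite disjP0 !in_setU fP0 tP0 !orbT. Qed.

Lemma uniq3 k a b c a' b' c' : (1 < k <= n)%N ->
  fharm (Jrest n) k a -> tens (fharm (Jfirst n) 1) (fharm (Jrest n) k.-1) b ->
  lmulset (pp k) (fharm (Jrest n) (k - 2)) c ->
  fharm (Jrest n) k a' -> tens (fharm (Jfirst n) 1) (fharm (Jrest n) k.-1) b' ->
  lmulset (pp k) (fharm (Jrest n) (k - 2)) c' ->
  a + b + c = a' + b' + c' -> [/\ a = a', b = b' & c = c'].
Proof.
move=> hk ha hb [h [hh ->]] ha' hb' [h' [hh' ->]] e.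
have hk1 : (1 < k)%N by case/andP: hk.
have [_ zb] := tens_in hk1 hb; have [_ zb'] := tens_in hk1 hb'.
rewrite !gmul_p in e *.
have ehh : h = h'.
  apply/ffunP => W; case: (boolP [disjoint P0 & W]) => hd; last first.
    by rewrite (supp_rest0 hh) ?(supp_rest0 hh').
  have := congr1 (fun g : G => g (W :|: P0)) e => /=.
  rewrite !ffunE (supp_rest0 ha (ndisjUP0 W)) (supp_rest0 ha' (ndisjUP0 W)).
  rewrite zb ?zb' ?in_setU ?fP0 ?tP0 ?orbT // !add0r.
  rewrite subsetUr setUDA // (Eop_vanish hh (subsetUr W P0)).
  by rewrite (Eop_vanish hh' (subsetUr W P0)) !mulr0 !addr0.
subst h'; move/addIr: e => e.
have hab : forall U, a U = a' U /\ b U = b' U.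
  move=> U; have := congr1 (fun g : G => g U) e => /=; rewrite !ffunE.
  case: (boolP ((f \in U) == (t \in U))) => [/eqP hft|hft].
    by rewrite zb // zb' // !addr0 => ->.
  have hnd : ~~ [disjoint P0 & U].
    by rewrite disjP0; move: hft; case: (f \in U); case: (t \in U).
  by rewrite (supp_rest0 ha hnd) (supp_rest0 ha' hnd) !add0r => ->.
by split => //; apply/ffunP => U; case: (hab U).
Qed.

Lemma main_k k : (1 < k <= n)%N ->
  dsum3 (fharm (Jall n) k : G -> Prop) (fharm (Jrest n) k)
    (tens (fharm (Jfirst n) 1) (fharm (Jrest n) k.-1))
    (lmulset (pp k) (fharm (Jrest n) (k - 2))).
Proof.
move=> hk; have hk1 : (1 < k)%N by case/andP: hk.
split; last by move=> a b c a2 b2 c2 h1 h2 h3 h4 h5 h6 e; exact: (uniq3 hk h1 h2 h3 h4 h5 h6 e).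
move=> x; split; first exact: exist3.
move=> [a [b [c [ha hb [h [hh ->]] ->]]]].
apply: fharmD; first apply: fharmD.
- exact: rest_all.
- exact: (tens_in hk1 hb).1.
by rewrite gmul_p; apply: third_in.
Qed.

Lemma gv_first v : (v \in gvars (Jfirst n)) = (v \in P0).
Proof. by rewrite /gvars !inE -(inj_eq val_inj). Qed.

Lemma first_nd b U : fharm (Jfirst n) 1 b -> b U != 0 -> ~~ [disjoint P0 & U].
Proof.
move=> [sb _] /sb [hs /eqP /cards1P [v hv]]; subst U.
move: hs; rewrite sub1set gv_first => hv.
by apply/negP => /disjP /(_ v hv); rewrite inE eqxx => /(_ isT).
Qed.

Lemma all1 x : fharm (Jall n) 1 x <-> forall S, x S != 0 -> #|S| = 1%N.
Proof.
split => [[sx _] S /sx [] //|h]; split.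
  move=> S /h hc; split => //; by apply/subsetP => v _; rewrite /gvars inE in_setT.
by apply/flap0P => U; apply: (@lap_deg R n (Jall n) x 1 U).
Qed.

Lemma main_1 : dsum2 (fharm (Jall n) 1 : G -> Prop) (fharm (Jrest n) 1) (fharm (Jfirst n) 1).
Proof.
split.
  move=> x; split.
    move=> hx; have [sx _] := hx.
    exists (Dsh set0 x), [ffun U : {set gvar n} => if [disjoint P0 & U] then 0 else x U]; split.
    - split.
        move=> S; rewrite ffunE setU0; case: ifP => [hd /sx [_ hc]|_]; last by rewrite eqxx.
        by rewrite sub_rest hd.
      apply/flap0P => U; apply: (@lap_deg R n (Jrest n) _ 1 U) => // S.
      rewrite ffunE setU0; case: ifP => [_ /sx [] //|_]; by rewrite eqxx.
    - have hs : forall S, [ffun U : {set gvar n} => if [disjoint P0 & U] then 0 else x U] S != 0 ->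
          S \subset gvars (Jfirst n) /\ #|S| = 1%N.
        move=> S; rewrite ffunE; case: ifP => [_|hd /sx [_ hc]]; first by rewrite eqxx.
        split => //; move/eqP/cards1P: hc => [v hv]; subst S.
        rewrite sub1set gv_first; apply/negPn/negP => hv0; move/negbT: hd; apply/negP/negPn.
        by apply/disjP => w hw; rewrite inE => /eqP hwv; subst w; rewrite hw in hv0.
      split => //; apply/flap0P => U; apply: (@lap_deg R n (Jfirst n) _ 1 U) => // S.
      by move/hs => [].
    - by apply/ffunP => U; rewrite !ffunE setU0; case: ifP; rewrite ?addr0 ?add0r.
  move=> [a [b [ha hb ->]]]; apply/all1 => S.
  have [sa _] := ha; have [sb _] := hb.
  rewrite ffunE; case: (eqVneq (a S) 0) => [->|/sa [] //]; rewrite add0r.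
  by move/sb => [].
move=> a b a' b' ha hb ha' hb' e.
have hab : forall U, a U = a' U /\ b U = b' U.
  move=> U; have := congr1 (fun g : G => g U) e => /=; rewrite !ffunE.
  case: (boolP [disjoint P0 & U]) => hd.
    have z : forall b0, fharm (Jfirst n) 1 b0 -> b0 U = 0.
      move=> b0 hb0; apply/eqP; apply/negPn/negP => /(first_nd hb0); by rewrite hd.
    by rewrite (z b hb) (z b' hb') !addr0 => ->.
  by rewrite (supp_rest0 ha hd) (supp_rest0 ha' hd) !add0r => ->.
by split; apply/ffunP => U; case: (hab U).
Qed.

End Main.

Theorem mainTheorem3 (R : realFieldType) (n : nat) (hn : (1 <= n)%N) :
  (forall k : nat, (1 < k <= n)%N ->
     dsum3 (fharm (Jall n) k : grass R n -> Prop)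
       (fharm (Jrest n) k)
       (tens (fharm (Jfirst n) 1) (fharm (Jrest n) k.-1))
       (lmulset
          (gmul (theta R (Ordinal hn, false)) (theta R (Ordinal hn, true)) +
           gscale (k%:R - n%:R - 1)^-1
             (\sum_(j in Jrest n) gmul (theta R (j, false)) (theta R (j, true))))
          (fharm (Jrest n) (k - 2)))) /\
  dsum2 (fharm (Jall n) 1 : grass R n -> Prop)
    (fharm (Jrest n) 1) (fharm (Jfirst n) 1).
Proof.
split; first by move=> k hk; exact: main_k.
exact: main_1.
Qed.
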